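(* Let $x_i$ be a mechanism for agent $i$ satisfying (P) and (IC), with indirect utility $U_i(s_i)=\max_{t\in[\underline s,\overline s]}U_i(t;s_i)$ on $[\underline s,\overline s]$. Then there is a function $\tilde U_i:[0,1]\to\mathbb R$ coinciding with $U_i$ on $[\underline s,\overline s]$ that is nondecreasing, convex, $2$-Lipschitz, and satisfies $0\le\tilde U_i\le\overline U_i$ on $[0,1]$.
   Context: Setup. A state $\omega\in\{-1,+1\}$ is drawn with probability $1/2$ each. There are $n\ge2$ agents. Conditional on $\omega$, signals are i.i.d. with distribution $\mathbb F_\omega$ on $[0,1]$, normalized so that $s_i=\mathbb P[\omega=+1\mid s_i]$; $\mathbb F_{-1},\mathbb F_{+1}$ mutually absolutely continuous with densities; $\mathbb F=(\mathbb F_{-1}+\mathbb F_{+1})/2$ has density supported on a non-singleton interval with endpoints $\underline s<\overline s$ in $[0,1]$. A mechanism for agent $i$ is measurable $x_i:[\underline s,\overline s]^n\to[0,1]$ (probability of receiving a good worth $\omega$, else payoff $0$). (P): $\mathbb E[\omega x_i(s_i,s_{-i})\mid s_i]\ge0$; (IC): $\mathbb E[\omega x_i(s_i,s_{-i})\mid s_i]\ge\mathbb E[\omega x_i(\hat s_i,s_{-i})\mid s_i]$, for all $s_i,\hat s_i$ in the support. For a report $t$ and a belief $s\in[0,1]$, $U_i(t;s)=s\,\mathbb E[x_i(t,s_{-i})\mid\omega=+1]-(1-s)\,\mathbb E[x_i(t,s_{-i})\mid\omega=-1]$ (equal to $\mathbb E[\omega x_i(t,s_{-i})\mid s_i=s]$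 for $s$ in the support). The first-best payoff is, for $s\in[0,1]$, $\overline U_i(s)=s\,\mathbb P[e(s,s_{-i})\mid\omega=+1]-(1-s)\,\mathbb P[e(s,s_{-i})\mid\omega=-1]$ where $e(s,s_{-i})$ is the event $s\prod_{k\ne i}s_k\ge(1-s)\prod_{k\ne i}(1-s_k)$ (i.e., $\mathrm{LR}(s,s_{-i})\ge1$); it is the interim payoff under the efficient allocation. *)

(* Defs.v *)
From HB Require Import structures.
From mathcomp Require Import all_boot all_order all_algebra.
From mathcomp Require Import all_classical all_reals all_analysis.
Set Implicit Arguments. Unset Strict Implicit. Unset Printing Implicit Defensive.
Import Order.TTheory GRing.Theory Num.Theory.
Local Open Scope classical_set_scope.
Local Open Scope ring_scope.

Section Defs.
Context {R : realType}.

(* For a nonnegative measurable g this is (Tonelli) the expectation of g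
   under the m-fold product of the distribution with density w. *)
Fixpoint iint (lo hi : R) (w : R -> R) (m : nat) :
    (m.-tuple R -> R) -> \bar R :=
  match m return (m.-tuple R -> R) -> \bar R with
  | 0 => fun g => (g [tuple])%:E
  | m'.+1 => fun g =>
      (\int[lebesgue_measure]_(y in `[lo, hi])
          ((w y)%:E * iint lo hi w (fun z : m'.-tuple R => g [tuple of y :: z])))%E
  end.

(* The profile (t, s_{-i}): agent i reports t, the others' signals are
   listed (in increasing order of agent index) in z. *)
Definition ins (n : nat) (i : 'I_n) (t : R) (z : n.-1.-tuple R) : n.-tuple R :=
  [tuple (if (j < i)%N then nth 0 z j else if j == i :> nat then t
          else nth 0 z j.-1) | j < n].

(* E[ g(s_{-i}) | omega ] where the other n-1 signals are i.i.d. with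
   density w (= density of F_omega), supported in [lo,hi]. *)
Definition condE (lo hi : R) (w : R -> R) (n : nat) (g : n.-1.-tuple R -> R) : R :=
  fine (iint lo hi w g).

Definition Uint (lo hi : R) (fp fm : R -> R) (n : nat) (x : n.-tuple R -> R)
    (i : 'I_n) (t s : R) : R :=
  s * condE lo hi fp (fun z => x (ins i t z))
  - (1 - s) * condE lo hi fm (fun z => x (ins i t z)).

Definition eff_event (m : nat) (s : R) (z : m.-tuple R) : R :=
  if (1 - s) * \prod_(k < m) (1 - tnth z k) <= s * \prod_(k < m) tnth z k
  then 1 else 0.

Definition Ubar (lo hi : R) (fp fm : R -> R) (n : nat) (s : R) : R :=
  s * condE lo hi fp (@eff_event n.-1 s)
  - (1 - s) * condE lo hi fm (@eff_event n.-1 s).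

Definition Lint (A : set R) (f : R -> R) : \bar R :=
  (\int[lebesgue_measure]_(y in A) (f y)%:E)%E.

Definition box (lo hi : R) (n : nat) : set (n.-tuple R) :=
  [set v | forall j : 'I_n, lo <= tnth v j <= hi].

End Defs.
Arguments box {R} lo hi n _.
Arguments Ubar {R} lo hi fp fm n s.

(* Main.v *)
Require Import Defs.
From HB Require Import structures.
From mathcomp Require Import all_boot all_order all_algebra.
From mathcomp Require Import all_classical all_reals all_analysis.
From mathcomp Require Import lra ring zify.
From mathcomp Require Import measurable_realfun.
Import Order.TTheory GRing.Theory Num.Theory.
Local Open Scope classical_set_scope.
Local Open Scope ring_scope.

Section Gen.
Context d (T : measurableType d) (R : realType) (mu : {measure set T -> \bar R}).
Local Open Scope ereal_scope.
Import HBNNSimple.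

Lemma le_integral_gen (D : set T) (f g : T -> \bar R) :
  (forall x, D x -> 0 <= f x) -> (forall x, D x -> f x <= g x) ->
  \int[mu]_(x in D) f x <= \int[mu]_(x in D) g x.
Proof.
move=> f0 fg.
have g0 : forall x, D x -> 0 <= g x by move=> x Dx; exact: le_trans (f0 _ Dx) (fg _ Dx).
rewrite (ge0_integralE _ f0) (ge0_integralE _ g0) /=.
apply: le_ereal_sup => _ [h /= hf <-]; exists h => //= x.
apply: le_trans (hf x) _; rewrite /patch; case: ifP => //; rewrite inE => Dx; exact: fg.
Qed.

Lemma integralZ_gen (D : set T) (k : R) (f : T -> \bar R) : (0 <= k)%R ->
  (forall x, D x -> 0 <= f x) ->
  \int[mu]_(x in D) (k%:E * f x) = k%:E * \int[mu]_(x in D) f x.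
Proof.
move=> k0 f0.
have [->|kpos] : k = 0%R \/ (0 < k)%R.
  by move: k0; rewrite le_eqVlt => /orP[/eqP<-|]; [left|right].
  under eq_integral do rewrite mul0e.
  by rewrite integral0 mul0e.
have kf0 : forall x, D x -> 0 <= k%:E * f x.
  by move=> x Dx; rewrite mule_ge0 // f0.
rewrite (ge0_integralE _ kf0) (ge0_integralE _ f0) /= erestrict_scale.
apply/eqP; rewrite eq_le; apply/andP; split.
- apply: ge_ereal_sup => _ [h /= hf <-].
  have ki0 : (0 <= k^-1)%R by rewrite invr_ge0.
  pose h' := scale_nnsfun h ki0.
  have -> : sintegral mu h = k%:E * sintegral mu h'.
    rewrite -sintegralrM; apply: eq_sintegral => x /=.
    by rewrite mulrA mulfV ?mul1r // gt_eqF.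
  rewrite lee_pmul2l //; apply: ereal_sup_ubound; exists h' => //= x.
  by rewrite EFinM lee_pdivrMl.
- rewrite -lee_pdivlMl //; apply: ge_ereal_sup => _ [h /= hf <-].
  rewrite lee_pdivlMl //.
  pose h' := scale_nnsfun h (ltW kpos).
  rewrite -sintegralrM; apply: ereal_sup_ubound; exists h' => //= x.
  by rewrite EFinM lee_pmul2l ?lte_fin.
Qed.

Lemma key (D N : set T) (mD : measurable D) (mN : measurable N) (muN : mu N = 0)
  (F1 G1 F2 G2 : T -> R)
  (F10 : forall x, D x -> (0 <= F1 x)%R) (G10 : forall x, D x -> (0 <= G1 x)%R)
  (F20 : forall x, D x -> (0 <= F2 x)%R) (G20 : forall x, D x -> (0 <= G2 x)%R)
  (mF2 : measurable_fun D F2) (mG2 : measurable_fun D G2)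
  (fG2 : \int[mu]_(x in D) (G2 x)%:E \is a fin_num)
  (H : forall x, D x -> ~ N x -> (F1 x + G2 x <= F2 x + G1 x)%R) :
  \int[mu]_(x in D) (F1 x)%:E + \int[mu]_(x in D) (G2 x)%:E <=
  \int[mu]_(x in D) (F2 x)%:E + \int[mu]_(x in D) (G1 x)%:E.
Proof.
have F10' : forall x, D x -> 0 <= (F1 x)%:E by move=> x Dx; rewrite lee_fin F10.
rewrite (ge0_integralE _ F10') /= -leeBrDr //.
apply: ge_ereal_sup => _ [h /= hf <-]; rewrite leeBrDr //.
have hD : forall x, ~ D x -> h x = 0%R.
  move=> x nDx; apply/eqP; rewrite eq_le fun_ge0 andbT.
  have := hf x; rewrite /patch; case: ifP; last by rewrite lee_fin.
  by rewrite inE => /nDx.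
have hle : forall x, D x -> (h x <= F1 x)%R.
  move=> x Dx; have := hf x; rewrite /patch; case: ifP; first by rewrite lee_fin.
  by rewrite mem_set.
have -> : sintegral mu h = \int[mu]_(x in D) (h x)%:E.
  rewrite integral_nnsfun //; apply: eq_sintegral => x /=; rewrite /patch.
  by case: ifP => // /negbT; rewrite notin_setE => Dx; rewrite hD.
have mDN : measurable (D `\` N) by exact: measurableD.
have mh : measurable_fun D h by exact: measurable_funP.
pose phi x := Num.max 0%R (h x + G2 x - F2 x)%R.
have mphi : measurable_fun D phi.
  apply: measurable_maxr; first exact: measurable_cst.
  by apply: measurable_funB => //; apply: measurable_funD.
have phi0 : forall x, (0 <= phi x)%R by move=> x; rewrite le_max lexx.
have mE (f : T -> R) : measurable_fun D f -> measurable_fun D (EFin \o f).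
  by move=> mf; apply/measurable_EFinP.
have mES (f : T -> R) : measurable_fun D f -> measurable_fun (D `\` N) (EFin \o f).
  by move=> mf; apply: measurable_funS (mE _ mf) => // x [].
have nn (f : T -> R) : (forall x, D x -> 0 <= f x)%R -> measurable_fun D f ->
    \int[mu]_(x in D) (f x)%:E = \int[mu]_(x in D `\` N) (f x)%:E.
  move=> f0 mf; apply: ge0_negligible_integral => //; try exact: mE.
rewrite (nn h) // (nn G2) // [X in _ <= X + _](nn F2) //.
rewrite -ge0_integralD //; last 4 first.
- by move=> x _; rewrite lee_fin.
- exact: mES.
- by move=> x [Dx _]; rewrite lee_fin G20.
- exact: mES.
apply: (@le_trans _ _ (\int[mu]_(x in D `\` N) ((F2 x)%:E + (phi x)%:E))).
  apply: ge0_le_integral => //.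
  - by move=> x [Dx _]; rewrite adde_ge0 ?lee_fin ?G20.
  - by apply: emeasurable_funD; apply: mES.
  - by apply: emeasurable_funD; apply: mES.
  move=> x [Dx _]; rewrite -!EFinD lee_fin /phi.
  by rewrite -lerBlDl le_max lexx orbT.
rewrite ge0_integralD //; last 4 first.
- by move=> x [Dx _]; rewrite lee_fin F20.
- exact: mES.
- by move=> x _; rewrite lee_fin.
- exact: mES.
apply: leeD => //.
apply: (@le_trans _ _ (\int[mu]_(x in D `\` N) (G1 x)%:E)).
  apply: le_integral_gen => x [Dx nNx]; first by rewrite lee_fin.
  rewrite lee_fin /phi ge_max G10 //=.
  have := H x Dx nNx; have := hle x Dx; lra.
rewrite !(integral_mkcond _ (fun x => (G1 x)%:E)).
apply: le_integral_gen => x _; rewrite /patch.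
  by case: ifP => // /set_mem [Dx _]; rewrite lee_fin G10.
case: ifP => [/set_mem [Dx _]|_]; first by rewrite mem_set.
by case: ifP => // /set_mem Dx; rewrite lee_fin G10.
Qed.

End Gen.

Section Iint.
Context (R : realType) (lo hi : R) (hlo : 0 <= lo) (hlohi : lo <= hi) (hhi : hi <= 1).
Local Notation D := (`[lo, hi]%classic : set R).
Local Notation mu := (@lebesgue_measure R).

Lemma inD y : D y <-> lo <= y <= hi.
Proof. by rewrite /= in_itv. Qed.

Lemma box_cons m y (z : m.-tuple R) :
  box lo hi m.+1 [tuple of y :: z] <-> (lo <= y <= hi /\ box lo hi m z).
Proof.
split.
  move=> H; split; first by have := H ord0; rewrite tnth0.
  by move=> j; have := H (lift ord0 j); rewrite tnthS.
move=> [Hy Hz] j; case: (unliftP ord0 j) => [j'|] ->; first by rewrite tnthS.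
by rewrite tnth0.
Qed.

Lemma box0 (z : 0.-tuple R) : box lo hi 0 z.
Proof. by move=> [] //. Qed.

Local Open Scope ereal_scope.

Lemma iint_ge0 (w : R -> R) (w0 : forall y, (lo <= y <= hi)%R -> (0 <= w y)%R) m g :
  (forall z, box lo hi m z -> (0 <= g z)%R) -> 0 <= iint lo hi w (m:=m) g.
Proof.
elim: m g => [|m IH] g g0 /=; first by rewrite lee_fin; apply: g0; exact: box0.
apply: integral_ge0 => y /inD Dy; apply: mule_ge0; first by rewrite lee_fin w0.
by apply: IH => z bz; apply: g0; apply/box_cons.
Qed.

Lemma iint_le (w : R -> R) (w0 : forall y, (lo <= y <= hi)%R -> (0 <= w y)%R) m g1 g2 :
  (forall z, box lo hi m z -> (0 <= g1 z <= g2 z)%R) ->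
  iint lo hi w (m:=m) g1 <= iint lo hi w (m:=m) g2.
Proof.
elim: m g1 g2 => [|m IH] g1 g2 g12 /=.
  by rewrite lee_fin; have /andP[] := g12 _ (box0 [tuple]).
apply: le_integral_gen => y /inD Dy.
  apply: mule_ge0; first by rewrite lee_fin w0.
  apply: iint_ge0 => // z bz.
  by have /andP[] := g12 _ (proj2 (box_cons _ _ _) (conj Dy bz)).
apply: lee_wpmul2l; first by rewrite lee_fin w0.
by apply: IH => z bz; apply: g12; apply/box_cons.
Qed.

Lemma iint_le1 (w : R -> R) (w0 : forall y, (0 <= y <= 1)%R -> (0 <= w y)%R)
  (mw : measurable_fun `[0%R : R, 1%R] w) (w1 : Lint `[0%R : R, 1%R] w = 1) m g :
  (forall z, box lo hi m z -> (0 <= g z <= 1)%R) -> iint lo hi w (m:=m) g <= 1.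
Proof.
have w0' : forall y, (lo <= y <= hi)%R -> (0 <= w y)%R.
  move=> y /andP[ly yh]; apply: w0; apply/andP; split; [exact: le_trans hlo ly|exact: le_trans yh hhi].
elim: m g => [|m IH] g g1 /=.
  by rewrite lee_fin; have /andP[] := g1 _ (box0 [tuple]).
apply: (@le_trans _ _ (\int[mu]_(y in D) (w y)%:E)).
  apply: le_integral_gen => y /inD Dy.
    apply: mule_ge0; first by rewrite lee_fin w0'.
    apply: iint_ge0 => // z bz.
    by have /andP[] := g1 _ (proj2 (box_cons _ _ _) (conj Dy bz)).
  rewrite -[X in _ <= X]mule1; apply: lee_wpmul2l; first by rewrite lee_fin w0'.
  by apply: IH => z bz; apply: g1; apply/box_cons.
rewrite -w1 /Lint; apply: ge0_subset_integral => //.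
- exact: (proj2 (measurable_EFinP _ _) mw).
- move=> y /= /[!in_itv] /= /andP[ly yh]; apply/andP; split.
    exact: le_trans hlo ly.
  exact: le_trans yh hhi.
Qed.

Lemma iint0 (w : R -> R) m : iint lo hi w (m:=m) (fun _ => 0%R) = 0.
Proof.
elim: m => [|m IH] //=.
under eq_integral do rewrite IH mule0.
by rewrite integral0.
Qed.

End Iint.

Definition eab {R : realType} (m : nat) (a b : R) (z : m.-tuple R) : R :=
  if b * \prod_(k < m) (1 - tnth z k) <= a * \prod_(k < m) tnth z k then 1 else 0.
Arguments eab {R} [m] a b z.

Section Claim.
Context (R : realType) (lo hi : R) (hlo : 0 <= lo) (hlohi : lo <= hi) (hhi : hi <= 1).
Local Notation D := (`[lo, hi]%classic : set R).
Local Notation mu := (@lebesgue_measure R).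

Lemma eab_cons m (a b y : R) (z : m.-tuple R) :
  eab a b [tuple of y :: z] = eab (a * y) (b * (1 - y)) z.
Proof.
rewrite /eab !big_ord_recl !tnth0.
under eq_bigr do rewrite tnthS.
under [X in _ <= _ * (_ * X)]eq_bigr do rewrite tnthS.
by rewrite !mulrA.
Qed.

Lemma eab01 m (a b : R) (z : m.-tuple R) : 0 <= eab a b z <= 1.
Proof. by rewrite /eab; case: ifP => _; rewrite ?lexx ?ler01. Qed.

Lemma box01 m (z : m.-tuple R) k : box lo hi m z -> 0 <= tnth z k <= 1.
Proof.
move=> /(_ k) /andP[h1 h2]; apply/andP; split; first exact: le_trans hlo h1.
exact: le_trans h2 hhi.
Qed.

Lemma eab_mono m (a b : R) (a0 : 0 <= a) (b0 : 0 <= b) (y1 y2 : R) (z : m.-tuple R) :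
  box lo hi m z -> y1 <= y2 ->
  eab (a * y1) (b * (1 - y1)) z <= eab (a * y2) (b * (1 - y2)) z.
Proof.
move=> bz y12; rewrite /eab.
set P := \prod_(k < m) (1 - tnth z k); set Q := \prod_(k < m) tnth z k.
have P0 : 0 <= P by apply: prodr_ge0 => k _; have /andP[_ h] := box01 _ _ k bz; lra.
have Q0 : 0 <= Q by apply: prodr_ge0 => k _; have /andP[h _] := box01 _ _ k bz.
case: ifP => h1; last by case: ifP => _; rewrite ?lexx ?ler01.
rewrite ifT //.
have e1 : b * (1 - y2) * P <= b * (1 - y1) * P.
  by apply: ler_wpM2r => //; apply: ler_wpM2l => //; lra.
have e2 : a * y1 * Q <= a * y2 * Q.
  by apply: ler_wpM2r => //; apply: ler_wpM2l => //.
exact: le_trans e1 (le_trans h1 e2).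
Qed.

End Claim.

Section Claim2.
Context (R : realType) (lo hi : R) (hlo : 0 <= lo) (hlohi : lo <= hi) (hhi : hi <= 1).
Local Notation D := (`[lo, hi]%classic : set R).
Local Notation mu := (@lebesgue_measure R).

Section W.
Context (w : R -> R) (w0 : forall s : R, 0 <= s <= 1 -> 0 <= w s)
  (mw : measurable_fun `[0%R : R, 1%R] w) (w1 : Lint `[0%R : R, 1%R] w = 1%E).

Lemma w0' (y : R) : lo <= y <= hi -> 0 <= w y.
Proof.
move=> /andP[ly yh]; apply: w0; apply/andP; split; [exact: le_trans hlo ly|exact: le_trans yh hhi].
Qed.

Lemma iint_fin m (g : m.-tuple R -> R) :
  (forall z, box lo hi m z -> 0 <= g z <= 1) -> iint lo hi w g \is a fin_num.
Proof.
move=> gb; rewrite ge0_fin_numE; last first.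
  by apply: iint_ge0 => // [y|z bz]; [exact: w0'|have /andP[] := gb z bz].
apply: (@le_lt_trans _ _ 1%E); last exact: ltry.
exact: (@iint_le1 _ _ _ hlo hhi w w0 mw w1 _ _ gb).
Qed.

Lemma iint_S_fine m (g : m.+1.-tuple R -> R) (k : R) (k0 : 0 <= k) :
  (forall z, box lo hi m.+1 z -> 0 <= g z <= 1) ->
  (k%:E * iint lo hi w g = \int[mu]_(y in D)
    (k * w y * fine (iint lo hi w (fun z : m.-tuple R => g [tuple of y :: z])))%:E)%E.
Proof.
move=> gb; rewrite /= -integralZ_gen //; last first.
  move=> y /inD Dy; apply: mule_ge0; first by rewrite lee_fin w0'.
  apply: iint_ge0 => // [y'|z bz]; first exact: w0'.
  by have /andP[] := gb _ (proj2 (box_cons _ _ _ _ _ _) (conj Dy bz)).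
apply: eq_integral => y /set_mem /inD Dy.
have fin : iint lo hi w (fun z : m.-tuple R => g [tuple of y :: z]) \is a fin_num.
  by apply: iint_fin => z bz; apply: gb; apply/box_cons.
by rewrite -[X in (_ * (_ * X))%E](fineK fin) -!EFinM mulrA.
Qed.

Lemma iint_S_eab m (a b k : R) (k0 : 0 <= k) :
  (k%:E * iint lo hi w (@eab R m.+1 a b) = \int[mu]_(y in D)
    (k * w y * fine (iint lo hi w (@eab R m (a * y) (b * (1 - y)))))%:E)%E.
Proof.
rewrite iint_S_fine //; last by move=> z _; exact: eab01.
apply: eq_integral => y _.
have -> : (fun z : m.-tuple R => eab a b [tuple of y :: z]) = eab (a * y) (b * (1 - y)).
  by apply/funext => z; exact: eab_cons.
by [].
Qed.

Lemma eab_fin m (a b : R) : iint lo hi w (@eab R m a b) \is a fin_num.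
Proof. by apply: iint_fin => z _; exact: eab01. Qed.

Lemma iint_ge0' m (g : m.-tuple R -> R) :
  (forall z, box lo hi m z -> 0 <= g z <= 1) -> (0 <= fine (iint lo hi w g))%R.
Proof.
move=> gb; apply: fine_ge0; apply: iint_ge0 => // [y|z bz]; first exact: w0'.
by have /andP[] := gb z bz.
Qed.

End W.

Context (fp fm : R -> R)
  (mfp : measurable_fun `[0%R : R, 1%R] fp) (mfm : measurable_fun `[0%R : R, 1%R] fm)
  (fp_ge0 : forall s : R, 0 <= s <= 1 -> 0 <= fp s)
  (fm_ge0 : forall s : R, 0 <= s <= 1 -> 0 <= fm s)
  (fp_int1 : Lint `[0%R : R, 1%R] fp = 1%E)
  (fm_int1 : Lint `[0%R : R, 1%R] fm = 1%E)
  (N : set R) (mN : measurable N) (muN : mu N = 0%E)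
  (hN : forall s, ~ N s -> 0 <= s <= 1 -> fp s * (1 - s) = s * fm s).

Lemma claim m : forall (a b : R) (g : m.-tuple R -> R), 0 <= a -> 0 <= b ->
  (forall z, box lo hi m z -> 0 <= g z <= 1) ->
  (a%:E * iint lo hi fp g + b%:E * iint lo hi fm (@eab R m a b) <=
   a%:E * iint lo hi fp (@eab R m a b) + b%:E * iint lo hi fm g)%E.
Proof.
elim: m => [|m IH] a b g a0 b0 gb.
  rewrite /= -!EFinM -!EFinD lee_fin /eab !big_ord0 !mulr1.
  have /andP[g0 g1] := gb [tuple] (box0 _ _ _ _).
  by case: ifP => h; nra.
have gyb : forall y : R, lo <= y <= hi -> forall z, box lo hi m z ->
    0 <= g [tuple of y :: z] <= 1.
  by move=> y Dy z bz; apply: gb; apply/box_cons.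
rewrite (iint_S_fine _ fp_ge0 mfp fp_int1 _ _ _ a0 gb).
rewrite (iint_S_fine _ fm_ge0 mfm fm_int1 _ _ _ b0 gb).
rewrite (iint_S_eab _ fp_ge0 mfp fp_int1 _ _ _ _ a0).
rewrite (iint_S_eab _ fm_ge0 mfm fm_int1 _ _ _ _ b0).
pose u y := fine (iint lo hi fp (fun z : m.-tuple R => g [tuple of y :: z])).
pose v y := fine (iint lo hi fm (fun z : m.-tuple R => g [tuple of y :: z])).
pose us y := fine (iint lo hi fp (@eab R m (a * y) (b * (1 - y)))).
pose vs y := fine (iint lo hi fm (@eab R m (a * y) (b * (1 - y)))).
have mD : measurable D by exact: measurable_itv.
have D01 : forall y : R, lo <= y <= hi -> 0 <= y <= 1.
  by move=> y /andP[ly yh]; apply/andP; split; [exact: le_trans hlo ly|exact: le_trans yh hhi].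
have usnd : {homo us : y1 y2 / y1 <= y2}.
  move=> y1 y2 y12; apply: fine_le; [exact: eab_fin|exact: eab_fin|].
  apply: iint_le => // [y /D01|z bz]; first exact: fp_ge0.
  by rewrite (eab_mono _ _ _ hlo hhi _ _ _ a0 b0 _ _ _ bz y12) andbT;
    have /andP[] := eab01 _ _ (a * y1) (b * (1 - y1)) z.
have vsnd : {homo vs : y1 y2 / y1 <= y2}.
  move=> y1 y2 y12; apply: fine_le; [exact: eab_fin|exact: eab_fin|].
  apply: iint_le => // [y /D01|z bz]; first exact: fm_ge0.
  by rewrite (eab_mono _ _ _ hlo hhi _ _ _ a0 b0 _ _ _ bz y12) andbT;
    have /andP[] := eab01 _ _ (a * y1) (b * (1 - y1)) z.
have mfpD : measurable_fun D fp.
  by apply: measurable_funS mfp => // y /inD /D01; rewrite /= in_itv.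
have mfmD : measurable_fun D fm.
  by apply: measurable_funS mfm => // y /inD /D01; rewrite /= in_itv.
apply: (@key _ _ _ mu D N mD mN muN (fun y => a * fp y * u y) (fun y => b * fm y * v y)
  (fun y => a * fp y * us y) (fun y => b * fm y * vs y)).
- move=> y /inD Dy; rewrite mulr_ge0 ?mulr_ge0 //; first exact: fp_ge0 (D01 _ Dy).
  exact: (iint_ge0' _ fp_ge0 _ _ (gyb y Dy)).
- move=> y /inD Dy; rewrite mulr_ge0 ?mulr_ge0 //; first exact: fm_ge0 (D01 _ Dy).
  exact: (iint_ge0' _ fm_ge0 _ _ (gyb y Dy)).
- move=> y /inD Dy; rewrite mulr_ge0 ?mulr_ge0 //; first exact: fp_ge0 (D01 _ Dy).
  by apply: (iint_ge0' _ fp_ge0) => z _; exact: eab01.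
- move=> y /inD Dy; rewrite mulr_ge0 ?mulr_ge0 //; first exact: fm_ge0 (D01 _ Dy).
  by apply: (iint_ge0' _ fm_ge0) => z _; exact: eab01.
- apply: measurable_funM; last exact: nondecreasing_measurable.
  by apply: measurable_funM => //; exact: measurable_cst.
- apply: measurable_funM; last exact: nondecreasing_measurable.
  by apply: measurable_funM => //; exact: measurable_cst.
- rewrite /vs -(iint_S_eab _ fm_ge0 mfm fm_int1 _ _ _ _ b0).
  by rewrite fin_numM // eab_fin.
move=> y /inD Dy nNy.
have /andP[y0 y1] := D01 _ Dy.
have ay0 : 0 <= a * y by rewrite mulr_ge0.
have by0 : 0 <= b * (1 - y) by rewrite mulr_ge0 // subr_ge0.
have IHy := IH _ _ _ ay0 by0 (gyb y Dy).
have IHr : a * y * u y + b * (1 - y) * vs y <= a * y * us y + b * (1 - y) * v y.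
  move: IHy; rewrite /u /v /us /vs.
  have f1 : iint lo hi fp (fun z : m.-tuple R => g [tuple of y :: z]) \is a fin_num.
    exact: (iint_fin _ fp_ge0 mfp fp_int1 _ _ (gyb y Dy)).
  have f2 : iint lo hi fm (fun z : m.-tuple R => g [tuple of y :: z]) \is a fin_num.
    exact: (iint_fin _ fm_ge0 mfm fm_int1 _ _ (gyb y Dy)).
  have f3 := eab_fin _ fp_ge0 mfp fp_int1 m (a * y) (b * (1 - y)).
  have f4 := eab_fin _ fm_ge0 mfm fm_int1 m (a * y) (b * (1 - y)).
  move: f1 f2 f3 f4.
  set X1 := iint lo hi fp _; set X2 := iint lo hi fm (eab _ _).
  set X3 := iint lo hi fp (eab _ _); set X4 := iint lo hi fm _.
  move=> f1 f4 f3 f2.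
  rewrite -(fineK f1) -(fineK f2) -(fineK f3) -(fineK f4) -!EFinM -!EFinD lee_fin /=.
  done.
have hn := hN y nNy (D01 _ Dy).
have Z1 : fp y - y * (fp y + fm y) = 0 by rewrite mulrDr -hn; ring.
have Z2 : fm y - (1 - y) * (fp y + fm y) = 0.
  by rewrite mulrDr [(1 - y) * fp y]mulrC hn; ring.
have S0 : 0 <= fp y + fm y by rewrite addr_ge0 // ?fp_ge0 ?fm_ge0 // D01.
rewrite -subr_ge0.
have -> : a * fp y * us y + b * fm y * v y - (a * fp y * u y + b * fm y * vs y) =
  (fp y + fm y) * (a * y * us y + b * (1 - y) * v y - (a * y * u y + b * (1 - y) * vs y))
  + a * (us y - u y) * (fp y - y * (fp y + fm y))
  + b * (v y - vs y) * (fm y - (1 - y) * (fp y + fm y)) by ring.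
rewrite Z1 Z2 !mulr0 !addr0.
by rewrite mulr_ge0 // subr_ge0.
Qed.

End Claim2.

Section Phi.
Context (R : realType).

Definition phi (A B s : R) : R := Num.max 0 (s * A - (1 - s) * B).

Lemma phi_ge0 A B s : 0 <= phi A B s.
Proof. by rewrite /phi le_max lexx. Qed.

Lemma phi_mono (A B a b : R) : 0 <= A -> 0 <= B -> a <= b -> phi A B a <= phi A B b.
Proof.
move=> A0 B0 ab; rewrite /phi ge_max.
set Mb := Num.max 0 _.
have Mb0 : 0 <= Mb by rewrite le_max lexx.
have Mbb : b * A - (1 - b) * B <= Mb by rewrite le_max lexx orbT.
have : 0 <= (b - a) * (A + B) by rewrite mulr_ge0 // ?subr_ge0 ?addr_ge0.
rewrite Mb0 /=; lra.
Qed.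

Lemma phi_conv (A B a b l : R) : 0 <= l <= 1 ->
  phi A B (l * a + (1 - l) * b) <= l * phi A B a + (1 - l) * phi A B b.
Proof.
move=> /andP[l0 l1]; rewrite /phi ge_max.
set Ma := Num.max 0 _; set Mb := Num.max 0 _.
have Ma0 : 0 <= Ma by rewrite le_max lexx.
have Mb0 : 0 <= Mb by rewrite le_max lexx.
have Maa : a * A - (1 - a) * B <= Ma by rewrite le_max lexx orbT.
have Mbb : b * A - (1 - b) * B <= Mb by rewrite le_max lexx orbT.
apply/andP; split; first by rewrite addr_ge0 // mulr_ge0 // subr_ge0.
have h1 : l * (a * A - (1 - a) * B) <= l * Ma by rewrite ler_wpM2l.
have h2 : (1 - l) * (b * A - (1 - b) * B) <= (1 - l) * Mb by rewrite ler_wpM2l // subr_ge0.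
have -> : (l * a + (1 - l) * b) * A - (1 - (l * a + (1 - l) * b)) * B =
  l * (a * A - (1 - a) * B) + (1 - l) * (b * A - (1 - b) * B) by ring.
exact: lerD.
Qed.

Lemma phi_lip (A B a b : R) : 0 <= A <= 1 -> 0 <= B <= 1 ->
  phi A B a <= phi A B b + 2 * `|a - b|.
Proof.
move=> /andP[A0 A1] /andP[B0 B1]; rewrite /phi ge_max.
set Mb := Num.max 0 _.
have Mb0 : 0 <= Mb by rewrite le_max lexx.
have Mbb : b * A - (1 - b) * B <= Mb by rewrite le_max lexx orbT.
have n0 : 0 <= `|a - b| by [].
apply/andP; split; first by rewrite addr_ge0 // mulr_ge0.
have e1 : (a - b) <= `|a - b| by exact: ler_norm.
have h1 : (a - b) * (A + B) <= `|a - b| * (A + B).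
  by rewrite ler_wpM2r // addr_ge0.
have h2 : `|a - b| * (A + B) <= `|a - b| * 2 by rewrite ler_wpM2l //; lra.
have -> : a * A - (1 - a) * B = (b * A - (1 - b) * B) + (a - b) * (A + B) by ring.
lra.
Qed.

Lemma phi_bound (A B s : R) : 0 <= A <= 1 -> 0 <= B <= 1 ->
  phi A B s <= `|s| + `|1 - s|.
Proof.
move=> /andP[A0 A1] /andP[B0 B1]; rewrite /phi ge_max addr_ge0 //=.
have h1 : s * A <= `|s| * A by rewrite ler_wpM2r // ler_norm.
have h2 : `|s| * A <= `|s| by rewrite ler_piMr.
have h3 : - (1 - s) * B <= `|1 - s| * B.
  by rewrite ler_wpM2r // -normrN ler_norm.
have h4 : `|1 - s| * B <= `|1 - s| by rewrite ler_piMr.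
rewrite mulNr in h3; lra.
Qed.

Lemma fine_ineq (a b : R) (X1 X2 X3 X4 : \bar R) :
  X1 \is a fin_num -> X2 \is a fin_num -> X3 \is a fin_num -> X4 \is a fin_num ->
  (a%:E * X1 + b%:E * X2 <= a%:E * X3 + b%:E * X4)%E ->
  a * fine X1 + b * fine X2 <= a * fine X3 + b * fine X4.
Proof.
move=> f1 f2 f3 f4.
by rewrite -(fineK f1) -(fineK f2) -(fineK f3) -(fineK f4) -!EFinM -!EFinD lee_fin.
Qed.

End Phi.
Arguments phi {R}.
Arguments phi_ge0 {R}.
Arguments phi_mono {R} [A B a b].
Arguments phi_conv {R} [A B a b l].
Arguments phi_lip {R} [A B a b].
Arguments phi_bound {R} [A B s].
Arguments fine_ineq {R} [a b X1 X2 X3 X4].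

Lemma box_ins (R : realType) (lo hi : R) n (i : 'I_n) (t : R) (z : n.-1.-tuple R) :
  lo <= t <= hi -> box lo hi n.-1 z -> box lo hi n (ins i t z).
Proof.
move=> ht bz j; rewrite /ins tnth_mktuple.
have nthb k : (k < n.-1)%N -> lo <= nth 0 z k <= hi.
  by move=> hk; have := bz (Ordinal hk); rewrite (tnth_nth 0).
have hi_ := ltn_ord i; have hj := ltn_ord j.
case: ifP => hji; first by apply: nthb; lia.
case: ifP => // /eqP hji2; apply: nthb; lia.
Qed.

Theorem lemmaA2 (R : realType) (n : nat) (hn : (2 <= n)%N)
  (fp fm : R -> R) (lo hi : R)
  (* F_{+1}, F_{-1}: distributions on [0,1] with densities fp, fm *)
  (mfp : measurable_fun `[0 : R, 1] fp) (mfm : measurable_fun `[0 : R, 1] fm)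
  (fp_ge0 : forall s : R, 0 <= s <= 1 -> 0 <= fp s)
  (fm_ge0 : forall s : R, 0 <= s <= 1 -> 0 <= fm s)
  (fp_int1 : Lint `[0 : R, 1] fp = 1%E)
  (fm_int1 : Lint `[0 : R, 1] fm = 1%E)
  (* mutual absolute continuity *)
  (hac : {ae lebesgue_measure, forall s : R, 0 <= s <= 1 -> (fp s = 0 <-> fm s = 0)})
  (* normalization s = P[omega = +1 | s] = fp s / (fp s + fm s) *)
  (hnorm : {ae lebesgue_measure, forall s : R, 0 <= s <= 1 -> fp s * (1 - s) = s * fm s})
  (* the density of F = (F_{-1}+F_{+1})/2 has support [lo,hi] *)
  (hlohi : 0 <= lo) (hlohi' : lo < hi) (hhi : hi <= 1)
  (hsupp_out : {ae lebesgue_measure, forall s : R, 0 <= s <= 1 ->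
                 ~ (lo <= s <= hi) -> (fp s + fm s) / 2 = 0})
  (hsupp_in : forall a b : R, lo <= a -> a < b -> b <= hi ->
     (0%E < Lint `]a, b[ (fun y => ((fp y + fm y) / 2)%R))%E)
  (* the mechanism x_i for agent i *)
  (i : 'I_n) (x : n.-tuple R -> R)
  (mx : measurable_fun (box lo hi n) x)
  (x01 : forall v : n.-tuple R, box lo hi n v -> 0 <= x v <= 1)
  (* (P) *)
  (hP : forall s : R, lo <= s <= hi -> 0 <= Uint lo hi fp fm x i s s)
  (* (IC) *)
  (hIC : forall s t : R, lo <= s <= hi -> lo <= t <= hi ->
     Uint lo hi fp fm x i t s <= Uint lo hi fp fm x i s s)
  (* indirect utility U_i(s) = max_{t in [lo,hi]} U_i(t; s) *)
  (U : R -> R)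
  (hU : forall s : R, lo <= s <= hi ->
     (exists2 t, lo <= t <= hi & U s = Uint lo hi fp fm x i t s) /\
     (forall t : R, lo <= t <= hi -> Uint lo hi fp fm x i t s <= U s)) :
  exists Ut : R -> R,
    (forall s : R, lo <= s <= hi -> Ut s = U s) /\
    (forall a b : R, 0 <= a -> a <= b -> b <= 1 -> Ut a <= Ut b) /\
    (forall a b l : R, 0 <= a <= 1 -> 0 <= b <= 1 -> 0 <= l <= 1 ->
       Ut (l * a + (1 - l) * b) <= l * Ut a + (1 - l) * Ut b) /\
    (forall a b : R, 0 <= a <= 1 -> 0 <= b <= 1 -> `|Ut a - Ut b| <= 2 * `|a - b|) /\
    (forall s : R, 0 <= s <= 1 -> 0 <= Ut s <= Ubar lo hi fp fm n s).
Proof.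
have hlo := hlohi.
have hle : lo <= hi by exact: ltW.
have [N [mN muN hN']] := hnorm.
have hN : forall s, ~ N s -> 0 <= s <= 1 -> fp s * (1 - s) = s * fm s.
  move=> s nNs s01; case: (pselect (fp s * (1 - s) = s * fm s)) => // neq.
  by exfalso; apply: nNs; apply: hN' => /= H; exact: neq (H s01).
have cl := @claim R lo hi hlo hhi fp fm mfp mfm fp_ge0 fm_ge0 fp_int1 fm_int1 N mN muN hN.
have gb : forall t, lo <= t <= hi -> forall z, box lo hi n.-1 z ->
    0 <= x (ins i t z) <= 1.
  by move=> t ht z bz; apply: x01; exact: box_ins.
pose A t := condE lo hi fp (fun z : n.-1.-tuple R => x (ins i t z)).
pose B t := condE lo hi fm (fun z : n.-1.-tuple R => x (ins i t z)).
have finp t (ht : lo <= t <= hi) :=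
  @iint_fin R lo hi hlo hhi fp fp_ge0 mfp fp_int1 _ _ (gb t ht).
have finm t (ht : lo <= t <= hi) :=
  @iint_fin R lo hi hlo hhi fm fm_ge0 mfm fm_int1 _ _ (gb t ht).
have A01 t : lo <= t <= hi -> 0 <= A t <= 1.
  move=> ht; apply/andP; split; first exact: (@iint_ge0' R lo hi hlo hhi fp fp_ge0 _ _ (gb t ht)).
  rewrite -lee_fin fineK; last exact: finp.
  exact: (@iint_le1 R lo hi hlo hhi fp fp_ge0 mfp fp_int1 _ _ (gb t ht)).
have B01 t : lo <= t <= hi -> 0 <= B t <= 1.
  move=> ht; apply/andP; split; first exact: (@iint_ge0' R lo hi hlo hhi fm fm_ge0 _ _ (gb t ht)).
  rewrite -lee_fin fineK; last exact: finm.
  exact: (@iint_le1 R lo hi hlo hhi fm fm_ge0 mfm fm_int1 _ _ (gb t ht)).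
have eE s : @eff_event R n.-1 s = @eab R n.-1 s (1 - s) by [].
have Ub0 s : 0 <= s <= 1 -> 0 <= Ubar lo hi fp fm n s.
  move=> /andP[s0 s1].
  have s0' : 0 <= 1 - s by rewrite subr_ge0.
  have g0 : forall z, box lo hi n.-1 z -> 0 <= (fun _ => 0 : R) z <= 1.
    by move=> z _; rewrite lexx ler01.
  have := fine_ineq (@iint_fin R lo hi hlo hhi fp fp_ge0 mfp fp_int1 _ _ g0)
    (@eab_fin R lo hi hlo hhi fm fm_ge0 mfm fm_int1 n.-1 s (1 - s))
    (@eab_fin R lo hi hlo hhi fp fp_ge0 mfp fp_int1 n.-1 s (1 - s))
    (@iint_fin R lo hi hlo hhi fm fm_ge0 mfm fm_int1 _ _ g0) (cl _ _ _ _ s0 s0' g0).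
  rewrite !iint0 /= !mulr0 add0r addr0 /Ubar /condE eE; lra.
have UleUb t s : lo <= t <= hi -> 0 <= s <= 1 ->
    Uint lo hi fp fm x i t s <= Ubar lo hi fp fm n s.
  move=> ht /andP[s0 s1].
  have s0' : 0 <= 1 - s by rewrite subr_ge0.
  have := fine_ineq (finp t ht)
    (@eab_fin R lo hi hlo hhi fm fm_ge0 mfm fm_int1 n.-1 s (1 - s))
    (@eab_fin R lo hi hlo hhi fp fp_ge0 mfp fp_int1 n.-1 s (1 - s))
    (finm t ht) (cl _ _ _ _ s0 s0' (gb t ht)).
  rewrite /Uint /Ubar /condE eE; lra.
pose E s := [set phi (A t) (B t) s | t in [set t : R | lo <= t <= hi]].
pose Ut s := sup (E s).
have hlo' : lo <= lo <= hi by rewrite lexx hle.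
have E0 s : E s !=set0 by exists (phi (A lo) (B lo) s); exists lo.
have hasS s : has_sup (E s).
  split; first exact: E0.
  exists (`|s| + `|1 - s|) => _ [t ht <-]; exact: phi_bound (A01 t ht) (B01 t ht).
have Ut_ge t s : lo <= t <= hi -> phi (A t) (B t) s <= Ut s.
  by move=> ht; apply: sup_upper_bound; [exact: hasS|exists t].
have Ut_le s c : (forall t, lo <= t <= hi -> phi (A t) (B t) s <= c) -> Ut s <= c.
  by move=> H; apply: ge_sup; [exact: E0|move=> _ [t ht <-]; exact: H].
have phiU t s : Uint lo hi fp fm x i t s <= phi (A t) (B t) s.
  by rewrite /phi le_max lexx orbT.
exists Ut; split; [|split; [|split; [|split]]].
- move=> s hs; have [[ts hts eU] Umax] := hU s hs.
  have U0 : 0 <= U s := le_trans (hP s hs) (Umax s hs).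
  apply/eqP; rewrite eq_le; apply/andP; split.
    by apply: Ut_le => t ht; rewrite /phi ge_max U0 /=; exact: Umax.
  by rewrite eU; apply: le_trans (phiU ts s) (Ut_ge ts s hts).
- move=> a b a0 ab b1; apply: Ut_le => t ht.
  have /andP[A0 _] := A01 t ht; have /andP[B0 _] := B01 t ht.
  exact: le_trans (phi_mono A0 B0 ab) (Ut_ge t b ht).
- move=> a b l _ _ /andP[l0 l1]; apply: Ut_le => t ht.
  apply: le_trans (phi_conv (introT andP (conj l0 l1))) _.
  apply: lerD; apply: ler_wpM2l; rewrite ?subr_ge0 //; exact: Ut_ge.
- move=> a b _ _.
  have h1 : Ut a <= Ut b + 2 * `|a - b|.
    apply: Ut_le => t ht; apply: le_trans (phi_lip (A01 t ht) (B01 t ht)) _.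
    by apply: lerD => //; exact: Ut_ge.
  have h2 : Ut b <= Ut a + 2 * `|a - b|.
    apply: Ut_le => t ht; rewrite distrC.
    apply: le_trans (phi_lip (A01 t ht) (B01 t ht)) _.
    by apply: lerD => //; exact: Ut_ge.
  rewrite ler_norml; apply/andP; split; lra.
- move=> s hs; apply/andP; split.
    exact: le_trans (phi_ge0 _ _ _) (Ut_ge lo s hlo').
  apply: Ut_le => t ht; rewrite /phi ge_max Ub0 //=; exact: UleUb.
Qed.
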